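(* Let $L\geq 2$ and consider the alternating minimization algorithm described below for minimizing $S$. Suppose $\sigma\in C^2(\mathbb{R})$ with $|\sigma|\leq M_0$, $|\sigma'|\leq M_1$, $|\sigma''|\leq M_2$ on $\mathbb{R}$ for some $M_0,M_1,M_2>0$, let $R>0$, and assume all parameters $\{W_l\}_{l=1}^L,\{b_l,c_l\}_{l=1}^{L-1}$ produced by the algorithm have Frobenius norm at most $R$. Let $C_1,\dots,C_L>0$ be constants such that, at every update step, the partial gradient $\nabla_{c_l}S$ (as a function of $c_l$ with all other parameters fixed at their current values) is $C_l$-Lipschitz on $\mathbb{R}^{M\times N}$ for $l=1,\dots,L-1$, and $\nabla_{W_L}S$ (as a function of $W_L$, others fixed) is $C_L$-Lipschitz on $\{W_L:\|W_L\|_{\mathrm F}\le R\}$, all with respect to the Frobenius norm. If the learning rates satisfy $\tau_l^k\in(0,2/C_l]$ for all $l$ and $k$, then $$S(\Theta^{k+1})\leq S(\Theta^k)\qquad\text{for all }k\geq 0,$$ where $\Theta^k=\{W_L^k,W_l^k,b_l^k,c_l^k\}_{l=1}^{L-1}$ denotes the parameters after the $k$-th iteration.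
   Context: Data: $X\in\mathbb{R}^{d\times N}$, $A\in\mathbb{R}^{J\times N}$ with one-hot columns, $J\ge2$. For $\boldsymbol z\in\mathbb{R}^J$, one-hot $\boldsymbol\alpha$: $\ell(\boldsymbol z,\boldsymbol\alpha)=-\sum_j\alpha_j\ln\big(e^{z_j}/\sum_k e^{z_k}\big)$; $\mathcal{L}_{\mathrm{vec}}(Z,A)=[\ell(\boldsymbol z_n,\boldsymbol\alpha_n)]_{n=1}^N$ for $Z=[\boldsymbol z_1\cdots\boldsymbol z_N]$. Parameters $W_1\in\mathbb{R}^{M\times d}$, $W_2,\dots,W_{L-1}\in\mathbb{R}^{M\times M}$, $W_L\in\mathbb{R}^{J\times M}$, $b_l\in\mathbb{R}^M$, $c_l\in\mathbb{R}^{M\times N}$; $\sigma$ entrywise; $\mathbf 1\in\mathbb{R}^N$ all-ones. $\omega_l=\prod_{j=l+1}^L\|W_j\|_{\mathrm F}^2$ and $S=\|\mathcal{L}_{\mathrm{vec}}(W_L\sigma(c_{L-1}),A)\|_2^2+\sum_{l=2}^{L-1}\omega_l\|W_l\sigma(c_{l-1})+b_l\mathbf 1^\top-c_l\|_{\mathrm F}^2+\omega_1\|W_1X+b_1\mathbf 1^\top-c_1\|_{\mathrm F}^2$. Auxiliary quantities (computed from current parameter values): $V_1=X$, $V_l=\sigma(c_{l-1})$ for $2\le l\le L-1$; $B_l=c_l-b_l\mathbf 1^\top$; $\lambda_1=0$, $\lambda_2=\|W_1V_1-B_1\|_{\mathrm F}^2$, and for $3\le l\le L-1$, $\lambda_l=\sum_{i=1}^{l-2}\big(\prod_{j=i+1}^{l-1}\|W_j\|_{\mathrm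 F}^2\big)\|W_iV_i-B_i\|_{\mathrm F}^2+\|W_{l-1}V_{l-1}-B_{l-1}\|_{\mathrm F}^2$. Algorithm: starting from an initialization, iteration $k=0,1,\dots$ performs in order: (1) $W_L\leftarrow W_L-\tau_L^k\nabla_{W_L}S$; (2) for $l=L-1,L-2,\dots,1$: $c_l\leftarrow c_l-\tau_l^k\nabla_{c_l}S$; then $W_l\leftarrow$ a least-squares solution of $W_l[V_l~~\sqrt{\lambda_l}I]=[B_l~~O]$ (i.e. a minimizer of $\|W_lV_l-B_l\|_{\mathrm F}^2+\lambda_l\|W_l\|_{\mathrm F}^2$); then $b_l\leftarrow$ the least-squares solution of $b_l\mathbf 1^\top=c_l-W_lV_l$ (the mean of the columns of $c_l-W_lV_l$). Each step uses the most recently updated values of all parameters; partial gradients are with respect to the Frobenius inner product. *)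

(* Defs.v *)
From HB Require Import structures.
From mathcomp Require Import all_boot all_order all_algebra.
From mathcomp Require Import all_classical all_reals all_analysis.
Set Implicit Arguments. Unset Strict Implicit. Unset Printing Implicit Defensive.
Import Order.TTheory GRing.Theory Num.Theory numFieldNormedType.Exports.
Local Open Scope ring_scope.

Section Defs.
Variable R : realType.

Definition frob2 m n (A : 'M[R]_(m, n)) : R := \sum_i \sum_j (A i j) ^+ 2.
Definition frob m n (A : 'M[R]_(m, n)) : R := Num.sqrt (frob2 A).
Definition frobdot m n (A B : 'M[R]_(m, n)) : R := \sum_i \sum_j A i j * B i j.

Definition is_gradient m n (f : 'M[R]_(m, n) -> R) (X G : 'M[R]_(m, n)) : Prop :=
  forall e : R, 0 < e -> exists2 dl : R, 0 < dl &
    forall H : 'M[R]_(m, n), frob H < dl ->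
      `| f (X + H) - f X - frobdot G H | <= e * frob H.

Definition grad_lipschitz_on m n (f : 'M[R]_(m, n) -> R)
    (D : 'M[R]_(m, n) -> Prop) (C : R) : Prop :=
  exists g : 'M[R]_(m, n) -> 'M[R]_(m, n),
    (forall X, D X -> is_gradient f X (g X)) /\
    (forall X Y, D X -> D Y -> frob (g X - g Y) <= C * frob (X - Y)).

Definition ell J (z alpha : 'cV[R]_J) : R :=
  - \sum_j alpha j 0 * ln (expR (z j 0) / \sum_k expR (z k 0)).
Definition Lvec J N (Z A : 'M[R]_(J, N)) : 'cV[R]_N :=
  \col_n ell (col n Z) (col n A).

Definition onehot_cols J N (A : 'M[R]_(J, N)) : Prop :=
  forall n : 'I_N, exists j : 'I_J, forall i : 'I_J, A i n = (i == j)%:R.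

Definition ones N : 'rV[R]_N := const_mx 1.

(* Parameters: W1 = W_1, Wm l = W_l (2 <= l <= L-1), WL = W_L,
   bb l = b_l, cc l = c_l (1 <= l <= L-1); other indices are unused. *)
Record params (d N M J : nat) := Params {
  W1 : 'M[R]_(M, d);
  Wm : nat -> 'M[R]_(M, M);
  WL : 'M[R]_(J, M);
  bb : nat -> 'cV[R]_M;
  cc : nat -> 'M[R]_(M, N) }.

Variables (d N M J L : nat).
Variable sigma : R -> R.
Variable X : 'M[R]_(d, N).
Variable A : 'M[R]_(J, N).

Local Notation P := (params d N M J).

Definition sig_mx (c : 'M[R]_(M, N)) : 'M[R]_(M, N) := map_mx sigma c.

Definition normW2 (p : P) (j : nat) : R :=
  if j == 1%N then frob2 (W1 p) else if j == L then frob2 (WL p) else frob2 (Wm p j).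

Definition omega (p : P) (l : nat) : R := \prod_(l.+1 <= j < L.+1) normW2 p j.

Definition Bmat (p : P) (l : nat) : 'M[R]_(M, N) := cc p l - bb p l *m ones N.

Definition S (p : P) : R :=
  frob2 (Lvec (WL p *m sig_mx (cc p L.-1)) A)
  + \sum_(2 <= l < L) omega p l *
        frob2 (Wm p l *m sig_mx (cc p l.-1) + bb p l *m ones N - cc p l)
  + omega p 1%N * frob2 (W1 p *m X + bb p 1%N *m ones N - cc p 1%N).

Definition resid2 (p : P) (i : nat) : R :=
  if i == 1%N then frob2 (W1 p *m X - Bmat p 1%N)
  else frob2 (Wm p i *m sig_mx (cc p i.-1) - Bmat p i).

Definition lambda (p : P) (l : nat) : R :=
  if l == 1%N then 0
  else if l == 2%N then resid2 p 1%N
  else \sum_(1 <= i < l.-1) (\prod_(i.+1 <= j < l) normW2 p j) * resid2 p i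
       + resid2 p l.-1.

Definition set_WL (p : P) (W : 'M[R]_(J, M)) : P :=
  Params (W1 p) (Wm p) W (bb p) (cc p).
Definition set_W1 (p : P) (W : 'M[R]_(M, d)) : P :=
  Params W (Wm p) (WL p) (bb p) (cc p).
Definition set_Wm (p : P) (l : nat) (W : 'M[R]_(M, M)) : P :=
  Params (W1 p) (fun i => if i == l then W else Wm p i) (WL p) (bb p) (cc p).
Definition set_b (p : P) (l : nat) (b : 'cV[R]_M) : P :=
  Params (W1 p) (Wm p) (WL p) (fun i => if i == l then b else bb p i) (cc p).
Definition set_c (p : P) (l : nat) (c : 'M[R]_(M, N)) : P :=
  Params (W1 p) (Wm p) (WL p) (bb p) (fun i => if i == l then c else cc p i).

Definition ridge_obj k (V : 'M[R]_(k, N)) (B : 'M[R]_(M, N)) (lam : R)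
    (W : 'M[R]_(M, k)) : R :=
  frob2 (W *m V - B) + lam * frob2 W.

Definition upd_WL (tau : R) (p p' : P) : Prop :=
  exists G, is_gradient (fun W => S (set_WL p W)) (WL p) G /\
            p' = set_WL p (WL p - tau *: G).

Definition upd_c (l : nat) (tau : R) (p p' : P) : Prop :=
  exists G, is_gradient (fun c => S (set_c p l c)) (cc p l) G /\
            p' = set_c p l (cc p l - tau *: G).

Definition upd_W (l : nat) (p p' : P) : Prop :=
  if l == 1%N then
    exists W, (forall W', ridge_obj X (Bmat p 1%N) (lambda p 1%N) W
                          <= ridge_obj X (Bmat p 1%N) (lambda p 1%N) W')
              /\ p' = set_W1 p W
  else
    exists W, (forall W', ridge_obj (sig_mx (cc p l.-1)) (Bmat p l) (lambda p l) W
                          <= ridge_obj (sig_mx (cc p l.-1)) (Bmat p l) (lambda p l) W')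
              /\ p' = set_Wm p l W.

Definition upd_b (l : nat) (p p' : P) : Prop :=
  let D := if l == 1%N then cc p 1%N - W1 p *m X
           else cc p l - Wm p l *m sig_mx (cc p l.-1) in
  p' = set_b p l ((N%:R)^-1 *: (D *m (ones N)^T)).

Definition params_bounded (Rb : R) (p : P) : Prop :=
  frob (W1 p) <= Rb /\ frob (WL p) <= Rb /\
  (forall l, (2 <= l <= L.-1)%N -> frob (Wm p l) <= Rb) /\
  (forall l, (1 <= l <= L.-1)%N -> frob (bb p l) <= Rb /\ frob (cc p l) <= Rb).

End Defs.

(* Main.v *)
Require Import Defs.
From HB Require Import structures.
From mathcomp Require Import all_boot all_order all_algebra.
From mathcomp Require Import all_classical all_reals all_analysis.
From mathcomp Require Import ring lra zify.
Import Order.TTheory GRing.Theory Num.Theory numFieldNormedType.Exports.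
Local Open Scope ring_scope.

Set Implicit Arguments. Unset Strict Implicit. Unset Printing Implicit Defensive.

Section Frob.
Variable R : realType.
Variables m n : nat.
Implicit Types A B Cm : 'M[R]_(m, n).

Lemma frob2_dot A : frob2 A = frobdot A A.
Proof. by rewrite /frob2 /frobdot; apply eq_bigr=> i _; apply eq_bigr=> j _; rewrite expr2. Qed.

Lemma frobdotC A B : frobdot A B = frobdot B A.
Proof. by rewrite /frobdot; apply eq_bigr=> i _; apply eq_bigr=> j _; rewrite mulrC. Qed.

Lemma frobdotDl A B Cm : frobdot (A + B) Cm = frobdot A Cm + frobdot B Cm.
Proof.
rewrite /frobdot -big_split; apply eq_bigr=> i _; rewrite -big_split.
by apply eq_bigr=> j _; rewrite !mxE mulrDl.
Qed.

Lemma frobdotZl (s : R) A B : frobdot (s *: A) B = s * frobdot A B.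
Proof.
rewrite /frobdot mulr_sumr; apply eq_bigr=> i _; rewrite mulr_sumr.
by apply eq_bigr=> j _; rewrite !mxE mulrA.
Qed.

Lemma frobdotNl A B : frobdot (- A) B = - frobdot A B.
Proof. by rewrite -scaleN1r frobdotZl mulN1r. Qed.

Lemma frobdotDr A B Cm : frobdot A (B + Cm) = frobdot A B + frobdot A Cm.
Proof. by rewrite frobdotC frobdotDl !(frobdotC A). Qed.
Lemma frobdotZr (s : R) A B : frobdot A (s *: B) = s * frobdot A B.
Proof. by rewrite frobdotC frobdotZl frobdotC. Qed.
Lemma frobdotNr A B : frobdot A (- B) = - frobdot A B.
Proof. by rewrite frobdotC frobdotNl frobdotC. Qed.

Lemma frob2_ge0 A : 0 <= frob2 A.
Proof. by apply: sumr_ge0 => i _; apply: sumr_ge0 => j _; apply: sqr_ge0. Qed.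

Lemma frob2_eq0 A : frob2 A = 0 -> A = 0.
Proof.
move=> /eqP; rewrite psumr_eq0; last by move=> i _; apply: sumr_ge0 => j _; apply: sqr_ge0.
move=> /allP H; apply/matrixP => i j; rewrite mxE.
have /implyP/(_ isT) := H i (mem_index_enum _).
rewrite psumr_eq0; last by move=> k _; apply: sqr_ge0.
move=> /allP/(_ j (mem_index_enum _)) /implyP/(_ isT).
by rewrite sqrf_eq0 => /eqP.
Qed.

Lemma frob_ge0 A : 0 <= frob A.
Proof. exact: sqrtr_ge0. Qed.

Lemma frob_sq A : frob A ^+ 2 = frob2 A.
Proof. by rewrite /frob sqr_sqrtr // frob2_ge0. Qed.

Lemma frob2D A B : frob2 (A + B) = frob2 A + 2 * frobdot A B + frob2 B.
Proof.
rewrite !frob2_dot frobdotDl !frobdotDr (frobdotC B A); lra.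
Qed.

Lemma frob2N A : frob2 (- A) = frob2 A.
Proof. by rewrite !frob2_dot frobdotNl frobdotNr opprK. Qed.

Lemma frob2Z (s : R) A : frob2 (s *: A) = s ^+ 2 * frob2 A.
Proof. by rewrite !frob2_dot frobdotZl frobdotZr mulrA expr2. Qed.

Lemma frobZ (s : R) A : frob (s *: A) = `|s| * frob A.
Proof. by rewrite /frob frob2Z sqrtrM ?sqr_ge0 // sqrtr_sqr. Qed.

Lemma frobN A : frob (- A) = frob A.
Proof. by rewrite -scaleN1r frobZ normrN normr1 mul1r. Qed.

Lemma frob_eq0 A : frob A = 0 -> A = 0.
Proof. by move=> h; apply: frob2_eq0; rewrite -frob_sq h expr0n. Qed.

Lemma cs_sq A B : frobdot A B ^+ 2 <= frob2 A * frob2 B.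
Proof.
have [b0|bn0] := eqVneq (frob2 B) 0.
  by rewrite b0 mulr0 (frob2_eq0 b0) -(scale0r (0 : 'M[R]_(m,n))) frobdotZr mul0r expr0n.
have bp : 0 < frob2 B by rewrite lt_def bn0 frob2_ge0.
have := frob2_ge0 (frob2 B *: A - frobdot A B *: B).
rewrite frob2D (frob2Z (frob2 B) A) frobdotZl frobdotNr frobdotZr frob2N (frob2Z (frobdot A B) B).
set a := frob2 A; set b := frob2 B; set c := frobdot A B => h.
have : 0 <= b * (a * b - c ^+ 2) by move: h; rewrite !expr2 => h; nra.
by rewrite pmulr_rge0 // subr_ge0.
Qed.

Lemma cs A B : frobdot A B <= frob A * frob B.
Proof.
rewrite /frob -sqrtrM ?frob2_ge0 //.
apply: (le_trans (ler_norm _)); rewrite -sqrtr_sqr.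
by rewrite ler_sqrt ?cs_sq // mulr_ge0 // frob2_ge0.
Qed.

Lemma frob_tri A B : frob (A + B) <= frob A + frob B.
Proof.
rewrite -(ler_pXn2r (n:=2)) // ?nnegrE ?addr_ge0 ?frob_ge0 //.
rewrite frob_sq frob2D sqrrD !frob_sq.
have := cs A B; nra.
Qed.

Lemma grad_unique (f : 'M[R]_(m, n) -> R) x G G' :
  is_gradient f x G -> is_gradient f x G' -> G = G'.
Proof.
move=> h1 h2; apply/eqP; rewrite -subr_eq0; apply/eqP.
set D := G - G'.
apply: frob_eq0.
have [D0|Dn0] := eqVneq (frob D) 0; first by [].
have Dp : 0 < frob D by rewrite lt_def Dn0 frob_ge0.
exfalso.
set e := frob D / 2.
have e0 : 0 < e by rewrite divr_gt0.
have e2 : 0 < e / 2 by rewrite divr_gt0.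
have [d1 d10 H1] := h1 _ e2; have [d2 d20 H2] := h2 _ e2.
set dl := Num.min d1 d2.
have dlp : 0 < dl by rewrite lt_min d10 d20.
have dl1 : dl <= d1 by rewrite /dl ge_min lexx.
have dl2 : dl <= d2 by rewrite /dl ge_min lexx orbT.
set s := dl / (2 * frob D).
have sp : 0 < s by rewrite divr_gt0 // mulr_gt0.
have fH : frob (s *: D) = dl / 2.
  by rewrite frobZ gtr0_norm // /s; field; exact: Dn0.
have hl : frob (s *: D) < dl by rewrite fH; move: dlp; lra.
have := H1 (s *: D) (lt_le_trans hl dl1).
have := H2 (s *: D) (lt_le_trans hl dl2).
rewrite fH => a1 a2.
have : `| frobdot D (s *: D) | <= e * (dl / 2).
  have -> : frobdot D (s *: D) =
     (f (x + s *: D) - f x - frobdot G' (s *: D)) - (f (x + s *: D) - f x - frobdot G (s *: D)).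
    by rewrite /D frobdotDl frobdotNl; lra.
  apply: (le_trans (ler_normB _ _)); move: a1 a2; lra.
rewrite frobdotZr -frob2_dot -frob_sq normrM gtr0_norm // ger0_norm ?sqr_ge0 //.
have -> : s * frob D ^+ 2 = dl / 2 * frob D.
  by rewrite /s; field; exact: Dn0.
have hh : 0 < dl / 2 by rewrite divr_gt0.
rewrite (mulrC e) (ler_pM2l hh) /e; move: Dp; lra.
Qed.

End Frob.

Section Desc.
Variable R : realType.
Local Open Scope classical_set_scope.
Local Open Scope ring_scope.

Lemma is_derive_eps (f : R -> R) t l :
  (forall e, 0 < e -> exists2 dl, 0 < dl & forall s, `|s| < dl ->
      `|f (t + s) - f t - s * l| <= e * `|s|) -> is_derive t 1 f l.
Proof.
move=> H.
have Hc : (fun h : R => h^-1 *: ((f \o shift t) (h *: 1) - f t)) @ 0^' --> l.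
  apply/cvgrPdist_le => e e0.
  have [dl dl0 Hd] := H e e0.
  near=> s.
  have s0 : s != 0 by near: s; exact: nbhs_dnbhs_neq.
  have sd : `|s| < dl by near: s; exact: dnbhs0_lt.
  have := Hd s sd.
  rewrite /= /shift [s *: 1]mulr1 [s + t]addrC -[s^-1 *: _]/(s^-1 * _).
  have -> : l - s^-1 * (f (t + s) - f t) = - s^-1 * (f (t + s) - f t - s * l).
    by field.
  rewrite normrM normrN normfV => h.
  have sp : 0 < `|s| by rewrite normr_gt0.
  by rewrite mulrC ler_pdivrMr.
split; first exact: (cvgP _ Hc).
exact: (cvg_lim _ Hc).
Unshelve. all: by end_near.
Qed.

Lemma dir_deriv m n (f : 'M[R]_(m, n) -> R) x h t G :
  is_gradient f (x + t *: h) G -> is_derive t 1 (fun u => f (x + u *: h)) (frobdot G h).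
Proof.
move=> HG; apply: is_derive_eps => e e0.
set k := frob h + 1.
have kp : 0 < k by rewrite /k ltr_wpDl ?frob_ge0.
have [dl dl0 Hd] := HG (e / k) (divr_gt0 e0 kp).
exists (dl / k); first by rewrite divr_gt0.
move=> s hs.
have fhk : frob h / k <= 1 by rewrite ler_pdivrMr // mul1r /k lerDl.
have hfs : frob (s *: h) < dl.
  rewrite frobZ; apply: (le_lt_trans (y := `|s| * k)).
    by rewrite ler_wpM2l // /k lerDl.
  by rewrite -ltr_pdivlMr.
have := Hd _ hfs.
have -> : x + t *: h + s *: h = x + (t + s) *: h by rewrite scalerDl addrA.
rewrite frobdotZr frobZ => H1.
apply: (le_trans H1).
have -> : e / k * (`|s| * frob h) = (e * `|s|) * (frob h / k) by rewrite /k; field; rewrite /k lt0r_neq0.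
by rewrite ler_piMr // mulr_ge0 // ltW.
Qed.

Lemma quad_deriv (c0 k t : R) :
  is_derive t 1 (fun u : R => u * c0 + k * u ^+ 2) (c0 + k * (2 * t)).
Proof.
apply: is_derive_eps => e e0.
have kp : 0 < `|k| + 1 by rewrite ltr_wpDl.
exists (e / (`|k| + 1)); first by rewrite divr_gt0.
move=> s hs.
have -> : (t + s) * c0 + k * (t + s) ^+ 2 - (t * c0 + k * t ^+ 2) - s * (c0 + k * (2 * t))
   = (k * s) * s by ring.
rewrite normrM ler_wpM2r //.
rewrite normrM.
have : `|s| * (`|k| + 1) <= e by rewrite -ler_pdivlMr // ltW.
have := normr_ge0 s; have := normr_ge0 k; nra.
Qed.

Lemma descent m n (f : 'M[R]_(m, n) -> R) (D : 'M[R]_(m, n) -> Prop) (C : R)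
    (g : 'M[R]_(m, n) -> 'M[R]_(m, n)) x h :
  0 <= C ->
  (forall t, 0 <= t <= 1 -> D (x + t *: h)) ->
  (forall y, D y -> is_gradient f y (g y)) ->
  (forall y z, D y -> D z -> frob (g y - g z) <= C * frob (y - z)) ->
  f (x + h) <= f x + frobdot (g x) h + C / 2 * frob2 h.
Proof.
move=> C0 Dseg Hg HL.
set c0 := frobdot (g x) h; set k := C / 2 * frob2 h.
pose phi := fun u : R => f (x + u *: h).
pose q := fun u : R => u * c0 + k * u ^+ 2.
pose psi := phi - q.
pose df := fun t : R => frobdot (g (x + t *: h)) h - (c0 + k * (2 * t)).
have Dpsi : forall t : R, 0 <= t <= 1 -> is_derive t 1 psi (df t).
  move=> t Ht; rewrite /psi /df.
  apply: is_deriveB; last exact: quad_deriv.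
  exact: (dir_deriv (Hg _ (Dseg t Ht))).
have [c cin eq] : exists2 c, c \in `]0, 1[%R & psi 1 - psi 0 = df c * (1 - 0).
  apply: MVT; first exact: ltr01.
    move=> t; rewrite in_itv /= => /andP[t0 t1]; apply: Dpsi.
    by rewrite !ltW.
  apply: continuous_in_subspaceT => t; rewrite inE /= in_itv /= => Ht.
  apply: differentiable_continuous; apply/derivable1_diffP.
  exact: (@ex_derive _ _ _ _ _ _ _ (Dpsi t Ht)).
move: cin; rewrite in_itv /= => /andP[c0p c1].
have dfc : df c <= 0.
  rewrite /df /k.
  have D0 : D x by have := Dseg 0; rewrite scale0r addr0; apply; rewrite lexx ler01.
  have Dc : D (x + c *: h) by apply: Dseg; rewrite !ltW.
  have := HL _ _ Dc D0; rewrite addrAC subrr add0r frobZ gtr0_norm //.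
  have := cs (g (x + c *: h) - g x) h.
  rewrite frobdotDl frobdotNl -/c0 -frob_sq.
  have := frob_ge0 h; have := frob_ge0 (g (x + c *: h) - g x).
  nra.
have e2 : psi 1 - psi 0 = (f (x + 1 *: h) - (1 * c0 + k * 1 ^+ 2)) - (f (x + 0 *: h) - (0 * c0 + k * 0 ^+ 2)) by [].
rewrite e2 scale1r scale0r addr0 in eq.
rewrite expr1n mulr1 mul0r expr0n /= mulr0 addr0 subr0 mul1r in eq.
have : df c * (1 - 0) <= 0 by rewrite subr0 mulr1.
rewrite -eq; lra.
Qed.

Lemma grad_step m n (f : 'M[R]_(m, n) -> R) (D : 'M[R]_(m, n) -> Prop) (C tau : R)
    x G :
  0 < C -> 0 < tau <= 2 / C ->
  grad_lipschitz_on f D C ->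
  is_gradient f x G ->
  (forall t, 0 <= t <= 1 -> D (x + t *: (- (tau *: G)))) ->
  f (x - tau *: G) <= f x.
Proof.
move=> Cp /andP[tp tC] [g [Hg HL]] HG Dseg.
have Dx : D x by have := Dseg 0; rewrite scale0r addr0; apply; rewrite lexx ler01.
have eG : G = g x by apply: (grad_unique HG (Hg _ Dx)).
have := descent (ltW Cp) Dseg Hg HL.
rewrite -eG frobdotNr frobdotZr -frob2_dot frob2N frob2Z.
have Ct : C * tau <= 2 by rewrite mulrC -ler_pdivlMr.
have := frob2_ge0 G; set F := frob2 G => F0.
have : tau * F * (C * tau) <= tau * F * 2 by rewrite ler_wpM2l // mulr_ge0 // ltW.
move=> h1 h2; apply: (le_trans h2).
have -> : C / 2 * (tau ^+ 2 * F) = tau * F * (C * tau) / 2 by field.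
lra.
Qed.

Lemma ball_seg m n (Rb : R) (x y : 'M[R]_(m, n)) t :
  frob x <= Rb -> frob y <= Rb -> 0 <= t <= 1 -> frob (x + t *: (y - x)) <= Rb.
Proof.
move=> hx hy /andP[t0 t1].
have -> : x + t *: (y - x) = (1 - t) *: x + t *: y.
  by rewrite scalerBr scalerBl scale1r addrA addrAC.
apply: (le_trans (frob_tri _ _)); rewrite !frobZ ger0_norm ?subr_ge0 // ger0_norm //.
have := frob_ge0 x; have := frob_ge0 y; nra.
Qed.

End Desc.

Section Struct.
Variable R : realType.
Variables (d N M J L : nat) (sigma : R -> R) (X : 'M[R]_(d, N)) (A : 'M[R]_(J, N)).
Hypothesis L2 : (2 <= L)%N.
Local Notation P := (params R d N M J).

Definition Fterm (p : P) := frob2 (Lvec (WL p *m sig_mx sigma (cc p L.-1)) A).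
Definition Qterm (l : nat) (p : P) :=
  Fterm p + \sum_(l.+1 <= i < L) omega L p i * resid2 sigma X p i.

Lemma S_sum (p : P) : S L sigma X A p =
  Fterm p + \sum_(1 <= i < L) omega L p i * resid2 sigma X p i.
Proof.
rewrite /S (big_ltn L2) /= [X in _ = _ + X]addrC addrA.
congr (_ + _ + _).
  apply: eq_big_nat => i /andP[i2 _]; congr (_ * _).
  rewrite /resid2; case: eqP => [ei|_]; first by rewrite ei in i2.
  by rewrite /Bmat opprB addrA.
by rewrite /resid2 eqxx /Bmat opprB addrA.
Qed.

Lemma omega_split (p : P) i l : (1 <= i)%N -> (i < l)%N -> (l < L.+1)%N ->
  omega L p i = (\prod_(i.+1 <= j < l) normW2 L p j) * normW2 L p l * omega L p l.
Proof.
move=> i1 il lL; rewrite /omega (big_cat_nat _ (n:=l)) //=; last exact: ltnW.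
by rewrite (big_ltn lL) mulrA.
Qed.

Lemma lambda_sum (p : P) l : (1 <= l)%N -> lambda L sigma X p l =
  \sum_(1 <= i < l) (\prod_(i.+1 <= j < l) normW2 L p j) * resid2 sigma X p i.
Proof.
move=> l1.
rewrite /lambda; case: eqP => [->|/eqP l1n]; first by rewrite big_geq.
case: eqP => [->|/eqP l2n].
  by rewrite big_nat1 big_geq // mul1r.
have l3 : (2 < l)%N by case: l l1 l1n l2n => [|[|[|]]].
have e : l = l.-1.+1 by rewrite prednK // ltnW.
rewrite [in RHS]e big_nat_recr /=; last by rewrite -ltnS -e ltnW.
rewrite -e; congr (_ + _); by rewrite big_geq ?mul1r.
Qed.

Lemma S_decomp (p : P) l : (1 <= l <= L.-1)%N ->
  S L sigma X A p = Qterm l p +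
    omega L p l * (resid2 sigma X p l + normW2 L p l * lambda L sigma X p l).
Proof.
move=> /andP[l1 lL].
have lL' : (l < L)%N by apply: (leq_ltn_trans lL); rewrite ltn_predL (ltnW L2).
rewrite S_sum /Qterm. rewrite (big_cat_nat _ (n:=l)) /=; [|exact: l1|exact: ltnW]. rewrite (big_ltn lL') /=.
have -> : \sum_(1 <= i < l) omega L p i * resid2 sigma X p i =
   normW2 L p l * omega L p l * lambda L sigma X p l.
  rewrite (lambda_sum p l1) mulr_sumr; apply: eq_big_nat => i /andP[i1 il].
  rewrite (omega_split p i1 il); last by rewrite ltnS ltnW.
  ring.
ring.
Qed.


End Struct.

Lemma sum_sq_expand (R : realType) n (x : 'I_n -> R) (c : R) :
  \sum_j (c - x j) ^+ 2 = n%:R * c ^+ 2 - 2 * c * (\sum_j x j) + \sum_j x j ^+ 2.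
Proof.
rewrite (eq_bigr (fun j => c ^+ 2 + (- (2 * c * x j)) + x j ^+ 2)); last by move=> j _; ring.
rewrite big_split big_split /= sumrN sumr_const card_ord.
by rewrite mulr_sumr; congr (_ - _ + _); rewrite mulr_natl.
Qed.

Lemma row_mean (R : realType) n (x : 'I_n -> R) (b : R) :
  \sum_j (n%:R^-1 * (\sum_k x k) - x j) ^+ 2 <= \sum_j (b - x j) ^+ 2.
Proof.
case: n x => [|n] x; first by rewrite !big_ord0.
rewrite !sum_sq_expand.
set s := \sum_k x k; set m := _^-1 * s.
have np : 0 < n.+1%:R :> R by rewrite ltr0n.
have hs : s = n.+1%:R * m by rewrite /m mulrA mulfV ?mul1r // lt0r_neq0.
rewrite hs; have := sqr_ge0 (b - m); nra.
Qed.

Lemma mean_opt (R : realType) M N (Dm : 'M[R]_(M, N)) (b : 'cV[R]_M) :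
  frob2 ((N%:R^-1 *: (Dm *m (ones R N)^T)) *m ones R N - Dm)
  <= frob2 (b *m ones R N - Dm).
Proof.
rewrite /frob2; apply: ler_sum => i _.
have E : forall (c : 'cV[R]_M) j, (c *m ones R N - Dm) i j = c i 0 - Dm i j.
  by move=> c j; rewrite !mxE big_ord1 /ones mxE mulr1.
rewrite [X in _ <= X](eq_bigr (fun j => (b i 0 - Dm i j) ^+ 2)); last by move=> j _; rewrite E.
rewrite [X in X <= _](eq_bigr (fun j => (N%:R^-1 * (\sum_k Dm i k) - Dm i j) ^+ 2)).
  exact: row_mean.
move=> j _; rewrite E !mxE; congr ((_ * _ - _) ^+ 2).
by apply: eq_bigr => k _; rewrite !mxE mulr1.
Qed.

Section Steps.
Variable R : realType.
Variables (d N M J L : nat) (sigma : R -> R) (X : 'M[R]_(d, N)) (A : 'M[R]_(J, N)).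
Hypothesis L2 : (2 <= L)%N.
Local Notation P := (params R d N M J).

Lemma omega_ge0 (p : P) l : 0 <= omega L p l.
Proof.
apply: prodr_ge0 => j _; rewrite /normW2.
by case: ifP => _; [|case: ifP => _]; apply: frob2_ge0.
Qed.

Lemma omega_ext (p p' : P) l :
  (forall j, (l < j)%N -> normW2 L p' j = normW2 L p j) -> omega L p' l = omega L p l.
Proof.
move=> h; apply: eq_big_nat => j /andP[lj _]; exact: h.
Qed.

Lemma lambda_ext (p p' : P) l : (1 <= l)%N ->
  (forall j, (j < l)%N -> normW2 L p' j = normW2 L p j) ->
  (forall i, (i < l)%N -> resid2 sigma X p' i = resid2 sigma X p i) ->
  lambda L sigma X p' l = lambda L sigma X p l.
Proof.
move=> l1 hn hr; rewrite !lambda_sum //; apply: eq_big_nat => i /andP[_ il].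
rewrite hr //; congr (_ * _); apply: eq_big_nat => j /andP[_ jl]; exact: hn.
Qed.

Lemma Qterm_ext (p p' : P) l :
  Fterm L sigma A p' = Fterm L sigma A p ->
  (forall j, (l < j)%N -> normW2 L p' j = normW2 L p j) ->
  (forall i, (l < i)%N -> resid2 sigma X p' i = resid2 sigma X p i) ->
  Qterm L sigma X A l p' = Qterm L sigma X A l p.
Proof.
move=> hF hn hr; rewrite /Qterm hF; congr (_ + _); apply: eq_big_nat => i /andP[li _].
rewrite hr //; congr (_ * _); apply: omega_ext => j ij; apply: hn.
exact: ltn_trans li ij.
Qed.

Lemma lLt l : (l <= L.-1)%N -> (l < L)%N.
Proof. by move=> lL; apply: (leq_ltn_trans lL); rewrite ltn_predL (ltnW L2). Qed.

Lemma stepW l (p p' : P) : (1 <= l <= L.-1)%N -> upd_W L sigma X l p p' ->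
  S L sigma X A p' <= S L sigma X A p.
Proof.
move=> hl; have /andP[l1 lL] := hl; have lL' := lLt lL.
have lnL : (l == L) = false by apply/negbTE; rewrite neq_ltn lL'.
rewrite /upd_W (S_decomp sigma X A L2 p hl); case: eqP => [l1e|/eqP l1n] [W [Hmin ->]].
- subst l; rewrite (S_decomp sigma X A L2 _ hl).
  rewrite (Qterm_ext (p := p)) //; last first.
  + by move=> i /= i1; rewrite /resid2 gtn_eqF.
  + by move=> j /= j1; rewrite /normW2 gtn_eqF.
  rewrite (omega_ext (p := p)); last by move=> j /= j1; rewrite /normW2 gtn_eqF.
  have hn : forall j, (j < 1)%N -> normW2 L (set_W1 p W) j = normW2 L p j.
    by move=> j; rewrite ltnS leqn0 => /eqP->.
  have hr : forall i, (i < 1)%N -> resid2 sigma X (set_W1 p W) i = resid2 sigma X p i.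
    by move=> i; rewrite ltnS leqn0 => /eqP->.
  rewrite (lambda_ext (isT : (0 < 1)%N) hn hr).
  apply: lerD => //; apply: ler_wpM2l; first exact: omega_ge0.
  have := Hmin (W1 p); rewrite /ridge_obj.
  rewrite /resid2 /normW2 /= -[Bmat (set_W1 p W) 1]/(Bmat p 1).
  by rewrite (mulrC (frob2 W)) (mulrC (frob2 (W1 p))).
- rewrite (S_decomp sigma X A L2 _ hl).
  rewrite (Qterm_ext (p := p)) //; last first.
  + by move=> i /= li; rewrite /resid2 /= (gtn_eqF li).
  + by move=> j /= lj; rewrite /normW2 /= (gtn_eqF lj).
  rewrite (omega_ext (p := p)); last by move=> j /= lj; rewrite /normW2 /= (gtn_eqF lj).
  rewrite (lambda_ext (p := p) (l := l)) //; first last.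
  + by move=> i /= il; rewrite /resid2 /= (ltn_eqF il).
  + by move=> j /= jl; rewrite /normW2 /= (ltn_eqF jl).
  apply: lerD => //; apply: ler_wpM2l; first exact: omega_ge0.
  have := Hmin (Wm p l); rewrite /ridge_obj.
  rewrite /resid2 /normW2 /= (negbTE l1n) lnL eqxx.
  by rewrite [lambda _ _ _ _ l * _]mulrC [lambda _ _ _ _ l * frob2 (Wm p l)]mulrC.
Qed.

Lemma resid_swap (Wv c : 'M[R]_(M, N)) (b : 'cV[R]_M) :
  Wv - (c - b *m ones R N) = b *m ones R N - (c - Wv).
Proof. by rewrite !opprB addrCA. Qed.

Lemma stepB l (p p' : P) : (1 <= l <= L.-1)%N -> upd_b sigma X l p p' ->
  S L sigma X A p' <= S L sigma X A p.
Proof.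
move=> hl; have /andP[l1 lL] := hl.
rewrite /upd_b => ->.
set bs := _ *: _.
rewrite (S_decomp sigma X A L2 p hl) (S_decomp sigma X A L2 _ hl).
have hr : forall i, i != l -> resid2 sigma X (set_b p l bs) i = resid2 sigma X p i.
  move=> i il; rewrite /resid2 /Bmat /=; case: eqP => [ei|_]; [subst i|]; by rewrite (negbTE il).
rewrite (Qterm_ext (p := p)) //; last by move=> i li; rewrite hr // gtn_eqF.
rewrite (omega_ext (p := p)) //.
rewrite (lambda_ext (p := p) (l := l)) //; last by move=> i il; rewrite hr // ltn_eqF.
apply: lerD => //; apply: ler_wpM2l; first exact: omega_ge0.
apply: lerD => //.
rewrite /bs /resid2 /Bmat /=; case: eqP => [->|_]; rewrite eqxx !resid_swap; exact: mean_opt.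
Qed.

Lemma set_c_id (p : P) l : set_c p l (cc p l) = p.
Proof.
case: p => w1 wm wl b c; rewrite /set_c /=; congr Params.
by apply: funext => i; case: eqP => // ->.
Qed.

Lemma set_WL_id (p : P) : set_WL p (WL p) = p.
Proof. by case: p. Qed.

Lemma stepC l tau C (p p' : P) : 0 < C -> 0 < tau <= 2 / C ->
  grad_lipschitz_on (fun c => S L sigma X A (set_c p l c)) (fun _ => True) C ->
  upd_c L sigma X A l tau p p' -> S L sigma X A p' <= S L sigma X A p.
Proof.
move=> Cp ht Hl [G [HG ->]].
have := grad_step Cp ht Hl HG (fun _ _ => I).
by rewrite /= set_c_id.
Qed.

Lemma stepWL tau C Rb (p p' : P) : 0 < C -> 0 < tau <= 2 / C ->
  grad_lipschitz_on (fun W => S L sigma X A (set_WL p W)) (fun W => frob W <= Rb) C ->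
  frob (WL p) <= Rb -> frob (WL p') <= Rb ->
  upd_WL L sigma X A tau p p' -> S L sigma X A p' <= S L sigma X A p.
Proof.
move=> Cp ht Hl h1 h2 [G [HG ep']].
rewrite ep' in h2 *; rewrite /= in h2.
have := grad_step Cp ht Hl HG.
rewrite /= set_WL_id; apply => t ht01.
have -> : - (tau *: G) = (WL p - tau *: G) - WL p by rewrite addrAC subrr add0r.
exact: ball_seg.
Qed.

End Steps.

Unset Implicit Arguments. Set Strict Implicit. Set Printing Implicit Defensive.

Theorem theorem3p4 (R : realType) (d N M J L : nat)
  (X : 'M[R]_(d, N)) (A : 'M[R]_(J, N)) (sigma : R -> R)
  (M0 M1 M2 Rb : R) (C : nat -> R) (tau : nat -> nat -> R)
  (Theta : nat -> params R d N M J)          (* Theta k : parameters after iteration k *)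
  (AfterWL : nat -> params R d N M J)        (* iteration k, after step (1) *)
  (AfterC AfterW AfterB : nat -> nat -> params R d N M J)
      (* iteration k, layer l: after the c_l, W_l, b_l updates respectively *) :
  (2 <= L)%N -> (2 <= J)%N -> onehot_cols A ->
  (* sigma in C^2 with bounded sigma, sigma', sigma'' *)
  (forall x, derivable sigma x 1) ->
  (forall x, derivable (derive1 sigma) x 1) ->
  continuous (derive1n 2 sigma) ->
  0 < M0 -> 0 < M1 -> 0 < M2 ->
  (forall x, `|sigma x| <= M0) ->
  (forall x, `|derive1 sigma x| <= M1) ->
  (forall x, `|derive1n 2 sigma x| <= M2) ->
  0 < Rb ->
  (* the algorithm *)
  (forall k, upd_WL L sigma X A (tau L k) (Theta k) (AfterWL k)) ->
  (forall k l, (1 <= l <= L.-1)%N ->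
     upd_c L sigma X A l (tau l k)
       (if l == L.-1 then AfterWL k else AfterB k l.+1) (AfterC k l)) ->
  (forall k l, (1 <= l <= L.-1)%N ->
     upd_W L sigma X l (AfterC k l) (AfterW k l)) ->
  (forall k l, (1 <= l <= L.-1)%N ->
     upd_b sigma X l (AfterW k l) (AfterB k l)) ->
  (forall k, Theta k.+1 = AfterB k 1%N) ->
  (* all parameters produced have Frobenius norm at most Rb *)
  (forall k, params_bounded L Rb (Theta k)) ->
  (* Lipschitz constants of the partial gradients at every update step *)
  (forall l, (1 <= l <= L)%N -> 0 < C l) ->
  (forall k, grad_lipschitz_on
       (fun W => S L sigma X A (set_WL (Theta k) W)) (fun W => frob W <= Rb) (C L)) ->
  (forall k l, (1 <= l <= L.-1)%N ->
     grad_lipschitz_on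
       (fun c => S L sigma X A
          (set_c (if l == L.-1 then AfterWL k else AfterB k l.+1) l c))
       (fun _ => True) (C l)) ->
  (* learning rates *)
  (forall l k, (1 <= l <= L)%N -> 0 < tau l k <= 2 / C l) ->
  forall k, S L sigma X A (Theta k.+1) <= S L sigma X A (Theta k).
Proof.
Proof.
move=> L2 J2 oh sd1 sd2 sc M0p M1p M2p hs0 hs1 hs2 Rbp HWL Hc HW Hb HT Hbd Cp HlipL Hlipc Htau k.
pose Pv l := if l == L.-1 then AfterWL k else AfterB k l.+1.
have step : forall l, (1 <= l <= L.-1)%N ->
    S L sigma X A (AfterB k l) <= S L sigma X A (Pv l) /\ WL (AfterB k l) = WL (Pv l).
  move=> l hl; have hlL : (1 <= l <= L)%N by move: hl L2; lia.
  split.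
  - apply: le_trans (stepB A L2 hl (Hb k l hl)) _.
    apply: le_trans (stepW A L2 hl (HW k l hl)) _.
    exact: (stepC (Cp l hlL) (Htau l k hlL) (Hlipc k l hl) (Hc k l hl)).
  - rewrite (Hb k l hl) /=.
    have -> : WL (AfterW k l) = WL (AfterC k l).
      move: (HW k l hl); rewrite /upd_W; case: eqP => _ [W [_ ->]] //.
    by have [G [_ ->]] := Hc k l hl.
have chain : forall n, (n <= L.-2)%N ->
    S L sigma X A (AfterB k (L.-1 - n)%N) <= S L sigma X A (AfterWL k) /\
    WL (AfterB k (L.-1 - n)%N) = WL (AfterWL k).
  elim=> [|n IH] hn.
    rewrite subn0; have hl : (1 <= L.-1 <= L.-1)%N by move: L2; lia.
    by have := step _ hl; rewrite /Pv eqxx.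
  have hl : (1 <= L.-1 - n.+1 <= L.-1)%N by move: hn L2; lia.
  have := step _ hl; rewrite /Pv.
  have -> : ((L.-1 - n.+1)%N == L.-1) = false by apply/eqP; move: hn L2; lia.
  have -> : ((L.-1 - n.+1).+1 = L.-1 - n)%N by move: hn L2; lia.
  have [IH1 IH2] := IH (ltnW hn).
  by move=> [h1 h2]; split; [exact: le_trans h1 IH1| rewrite h2].
have [c1 c2] := chain L.-2 (leqnn _).
have e1 : (L.-1 - L.-2 = 1)%N by move: L2; lia.
rewrite e1 -HT in c1 c2.
apply: le_trans c1 _.
have hL : (1 <= L <= L)%N by move: L2; lia.
have [b1 [b2 _]] := Hbd k; have [_ [b2' _]] := Hbd k.+1.
rewrite c2 in b2'.
exact: (stepWL (Cp L hL) (Htau L k hL) (HlipL k) b2 b2' (HWL k)).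
Qed.
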